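(* Let $\phi$ be a feature map for mono-filtrations that is absolutely bounded and internally stable, let $R\subset\mathbb{R}^2$ be a bounded axis-aligned rectangle whose bottom-left corner is the origin, and let $\mathcal{X},\mathcal{Y}$ be two bi-filtrations of size $n$. Then $$\|\Phi_{\mathcal{X}}-\Phi_{\mathcal{Y}}\|_{L^2(\Delta^{(2)})}\le C\cdot n\cdot \mathrm{area}(R)\cdot d_{match}(\mathcal{X},\mathcal{Y})$$ for some constant $C$ (depending only on $\phi$).
   Context: Let $X$ be a finite abstract simplicial complex. For $p,q\in\mathbb{R}^2$ write $p\le q$ (resp. $p<q$) if both coordinates satisfy $\le$ (resp. $<$). A mono-filtration of $X$ assigns to each $\alpha\in\mathbb{R}$ a subcomplex $\mathcal{X}(\alpha)$, nested in $\alpha$; its size is the number of simplices of $X$. A bi-filtration $\mathcal{X}$ assigns to each $p\in\mathbb{R}^2$ a subcomplex $\mathcal{X}(p)$ with $\mathcal{X}(p)\subseteq\mathcal{X}(q)$ whenever $p\le q$. A point $p$ is critical for a simplex $\sigma$ if for every $\epsilon>0$, $\sigma\notin\mathcal{X}(p_1-\epsilon,p_2)$, $\sigma\notin\mathcal{X}(p_1,p_2-\epsilon)$, and $\sigma\in\mathcal{X}(p_1+\epsilon,p_2)\cap\mathcal{X}(p_1,p_2+\epsilon)$. Bi-filtrations are assumed tame (finitely many critical points); the size of $\mathcal{X}$ is the total number of critical points over all simplices. Let $\mathcal{L}$ be the set of non-vertical lines in $\mathbb{R}^2$ with positive slope. Each $\ell\in\mathcal{L}$ meets the line $x=-y$ in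 a unique point $b$ and is parametrized as $b+\lambda a$ with $a=(a_1,a_2)$ its unit direction vector with positive coordinates; $\hat{\ell}:=\min\{a_1,a_2\}$. The slice $\mathcal{X}_\ell$ is the mono-filtration $\alpha\mapsto\mathcal{X}(b+\alpha a)$ (of size at most the size of $\mathcal{X}$). For a mono-filtration, $D(\cdot)$ denotes its persistence diagram and $d_B$ the bottleneck distance between persistence diagrams (written $d_B(\mathcal{X},\mathcal{Y})$ for mono-filtrations). The matching distance of bi-filtrations is $d_{match}(\mathcal{X},\mathcal{Y}):=\sup_{\ell\in\mathcal{L}}\hat{\ell}\, d_B(\mathcal{X}_\ell,\mathcal{Y}_\ell)$. Let $\Delta^{(1)}:=\{(x_1,x_2):x_1<x_2\}$. A feature map $\phi$ assigns to each mono-filtration $\mathcal{X}$ a function $\phi_{\mathcal{X}}\in L^2(\Delta^{(1)})$. It is absolutely bounded if there is $v_1>0$ with $0\le \phi_{\mathcal{X}}(x)\le v_1 n$ for all mono-filtrations $\mathcal{X}$ of size $n$ and $x\in\Delta^{(1)}$; it is internally stable if there is $v_3>0$ with $|\phi_{\mathcal{X}}(x)-\phi_{\mathcal{Y}}(x)|\le v_3 n\, d_B(\mathcal{X},\mathcal{Y})$ for all mono-filtrations $\mathcal{X},\mathcal{Y}$ of size $n$ and $x\in\Delta^{(1)}$. Let $\Delta^{(2)}:=\{(p,q)\in\mathbb{R}^2\times\mathbb{R}^2: p<q\}\subset\mathbb{R}^4$ with Lebesgue measure. For $(p,q)\in\Delta^{(2)}$ let $\ell\in\mathcal{L}$ be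 the line through $p,q$ and $\lambda_p<\lambda_q$ the parameters with $p=b+\lambda_p a$, $q=b+\lambda_q a$; define $\Phi_{\mathcal{X}}(p,q):=\chi_R(p)\chi_R(q)\,\hat{\ell}\,\phi_{\mathcal{X}_\ell}(\lambda_p,\lambda_q)$, with $\chi_R$ the indicator of $R$. *)

(* Defs.v *)
From HB Require Import structures.
From mathcomp Require Import all_boot all_order all_algebra finmap.
From mathcomp Require Import all_classical all_reals all_analysis.
Set Implicit Arguments.
Unset Strict Implicit.
Unset Printing Implicit Defensive.
Import Order.TTheory GRing.Theory Num.Theory.
Local Open Scope ring_scope.
Local Open Scope classical_set_scope.


Definition le2 {R : realType} (p q : R * R) : Prop := p.1 <= q.1 /\ p.2 <= q.2.
Definition lt2 {R : realType} (p q : R * R) : Prop := p.1 < q.1 /\ p.2 < q.2.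

Definition simplex := {fset nat}.
Definition complex := {fset simplex}.

Definition is_complex (K : complex) : Prop :=
  (forall s, s \in K -> s != fset0) /\
  (forall s t : simplex, s \in K -> (t `<=` s)%fset -> t != fset0 -> t \in K).

(* Mono-filtrations.  A mono-filtration of K is alpha |-> K(alpha) with    *)
(* K(alpha) = {s in K | f s <= alpha} for a filter function f monotone on  *)
(* faces (so every K(alpha) is a subcomplex and they are nested).  Its size *)
(* is the number of simplices of K.                                        *)
Definition monofilt (R : realType) : Type := (complex * (simplex -> R))%type.

Definition is_monofilt {R : realType} (M : monofilt R) : Prop :=
  is_complex M.1 /\
  (forall s t : simplex, s \in M.1 -> t \in M.1 -> (t `<=` s)%fset -> M.2 t <= M.2 s).

Definition mf_size {R : realType} (M : monofilt R) : nat := #|` M.1|.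

(* Simplices of K are indexed by 'I_N, N = #|` K|; chains are row vectors  *)
(* 'rV[F]_N and the boundary is c |-> c *m bdry.                           *)
Section Homology.
Variables (F : fieldType) (R : realType) (M : monofilt R).

Definition sK : seq simplex := enum_fset M.1.
Definition NK : nat := size sK.
Definition simp (i : 'I_NK) : simplex := nth fset0 sK i.

(* coefficient of the face t in the boundary of s (oriented by the order  *)
(* of nat on vertices): (-1)^(position of the removed vertex)              *)
Definition bcoef (s t : simplex) : F :=
  if ((t `<=` s)%fset) && (#|` s| == (#|` t|).+1)
  then (-1) ^+ (\sum_(u <- enum_fset (s `\` t)%fset) count (fun w => w < u)%N (enum_fset t))
  else 0.

Definition bdry : 'M[F]_NK := \matrix_(i, j) bcoef (simp i) (simp j).

(* span of the k-simplices of K entering by time alpha *)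
Definition selk (k : nat) (alpha : R) : 'M[F]_NK :=
  diag_mx (\row_i ((#|` simp i| == k.+1) && (M.2 (simp i) <= alpha))%:R).

Definition cycles (k : nat) (alpha : R) : 'M[F]_NK :=
  (selk k alpha :&: kermx bdry)%MS.
Definition boundaries (k : nat) (alpha : R) : 'M[F]_NK :=
  (selk k.+1 alpha *m bdry)%MS.

(* rank of H_k(K(s)) -> H_k(K(t)) *)
Definition pbetti (k : nat) (s t : R) : nat :=
  (\rank (cycles k s) - \rank (cycles k s :&: boundaries k t)%MS)%N.

(* Persistence diagram in degree k: points (birth, death) with death in   *)
(* \bar R (death = +oo for essential classes), as a list with repetitions. *)
(* Multiplicities by the usual inclusion-exclusion formula over the       *)
(* sorted critical values c_1 < ... < c_r, with c_0 = -oo.                 *)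
Definition critv : seq R := sort <=%R (undup [seq M.2 s | s <- sK]).
Definition nc : nat := size critv.
Definition cv (i : nat) : R := nth 0 critv i.-1.   (* i in 1..nc *)
Definition betI (k i j : nat) : nat :=
  if i == 0%N then 0%N else pbetti k (cv i) (cv j).

Definition mult (k i j : nat) : nat :=
  if (i < j)%N then
    ((betI k i j.-1 + betI k i.-1 j) - (betI k i.-1 j.-1 + betI k i j))%N
  else 0%N.
Definition mult_inf (k i : nat) : nat := (betI k i nc - betI k i.-1 nc)%N.

Definition pdiagram (k : nat) : seq (R * \bar R) :=
  flatten [seq nseq (mult k i j) (cv i, (cv j)%:E) | i <- iota 1 nc, j <- iota 1 nc]
  ++ flatten [seq nseq (mult_inf k i) (cv i, +oo%E) | i <- iota 1 nc].

End Homology.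

(* Bottleneck distance (L^oo ground distance, unmatched points go to the  *)
(* diagonal at cost (death - birth)/2).                                    *)
Section Bottleneck.
Variable R : realType.
Local Open Scope ereal_scope.

Definition ddist (x y : \bar R) : \bar R :=
  match x, y with
  | EFin a, EFin b => (`|a - b|)%:E
  | +oo, +oo => 0
  | -oo, -oo => 0
  | _, _ => +oo
  end.

Definition ptdist (p q : R * \bar R) : \bar R :=
  maxe (`|p.1 - q.1|%R)%:E (ddist p.2 q.2).

Definition halfpers (p : R * \bar R) : \bar R := (p.2 - p.1%:E) * (2^-1)%:E.

Definition eps_matching (s t : seq (R * \bar R)) (eps : R) : Prop :=
  exists m : 'I_(size s) -> option 'I_(size t),
    [/\ (forall i i' j, m i = Some j -> m i' = Some j -> i = i'),
        (forall i j, m i = Some j ->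
           ptdist (nth (0%R, 0) s i) (nth (0%R, 0) t j) <= eps%:E),
        (forall i, m i = None -> halfpers (nth (0%R, 0) s i) <= eps%:E) &
        (forall j : 'I_(size t), (forall i, m i <> Some j) ->
           halfpers (nth (0%R, 0) t j) <= eps%:E)].

Definition bottleneck (s t : seq (R * \bar R)) : \bar R :=
  ereal_inf [set e%:E | e in [set e : R | (0 <= e)%R /\ eps_matching s t e]].

Definition dB (F : fieldType) (M1 M2 : monofilt R) : \bar R :=
  ereal_sup [set bottleneck (pdiagram F M1 k) (pdiagram F M2 k) | k in [set: nat]].

End Bottleneck.

Definition lebR2 {R : realType} :=
  ((@lebesgue_measure R) \x (@lebesgue_measure R))%E.

Definition Delta1 {R : realType} : set (R * R) := [set x | x.1 < x.2].

Definition featmap (R : realType) := monofilt R -> R * R -> R.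

Definition is_feature_map {R : realType} (phi : featmap R) : Prop :=
  forall M : monofilt R, is_monofilt M ->
    measurable_fun Delta1 (phi M) /\
    (\int[lebR2]_(x in Delta1) ((phi M x) ^+ 2)%:E < +oo)%E.

Definition abs_bounded {R : realType} (phi : featmap R) : Prop :=
  exists v1 : R, 0 < v1 /\
    forall (n : nat) (M : monofilt R), is_monofilt M -> mf_size M = n ->
      forall x, Delta1 x -> 0 <= phi M x <= v1 * n%:R.

Definition int_stable {R : realType} (F : fieldType) (phi : featmap R) : Prop :=
  exists v3 : R, 0 < v3 /\
    forall (n : nat) (M1 M2 : monofilt R), is_monofilt M1 -> is_monofilt M2 ->
      mf_size M1 = n -> mf_size M2 = n ->
      forall x, Delta1 x ->
        ((`|phi M1 x - phi M2 x|)%:E <= (v3 * n%:R)%:E * dB F M1 M2)%E.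

(* Bi-filtrations.  A (finitely presented) bi-filtration of K assigns to  *)
(* each simplex s a finite nonempty set of grades G s, and                 *)
(*   X(p) = {s in K | exists g in G s, g <= p};                           *)
Definition bifilt (R : realType) : Type := (complex * (simplex -> {fset (R * R)}))%type.

Definition bf_mem {R : realType} (X : bifilt R) (p : R * R) (s : simplex) : Prop :=
  s \in X.1 /\ exists2 g, g \in X.2 s & le2 g p.

Definition is_bifilt {R : realType} (X : bifilt R) : Prop :=
  is_complex X.1 /\
  (forall s, s \in X.1 -> X.2 s != fset0) /\
  (forall s t : simplex, s \in X.1 -> t \in X.1 -> (t `<=` s)%fset ->
     forall g, g \in X.2 s -> exists2 g', g' \in X.2 t & le2 g' g).

Definition critical {R : realType} (X : bifilt R) (s : simplex) (p : R * R) : Prop :=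
  forall eps : R, 0 < eps ->
    ~ bf_mem X (p.1 - eps, p.2) s /\ ~ bf_mem X (p.1, p.2 - eps) s /\
    bf_mem X (p.1 + eps, p.2) s /\ bf_mem X (p.1, p.2 + eps) s.

(* the critical points of s are among its grades *)
Definition bf_size {R : realType} (X : bifilt R) : nat :=
  \sum_(s <- enum_fset X.1)
     count (fun g => `[< critical X s g >]) (enum_fset (X.2 s)).

(* Lines of positive slope: ell = b + lambda a, b on x = -y, a a unit     *)
(* vector with positive coordinates; lhat = min(a1, a2).                   *)
Definition is_line {R : realType} (b a : R * R) : Prop :=
  b.1 = - b.2 /\ 0 < a.1 /\ 0 < a.2 /\ a.1 ^+ 2 + a.2 ^+ 2 = 1.

Definition lhat {R : realType} (a : R * R) : R := Num.min a.1 a.2.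

(* slice X_ell : alpha |-> X(b + alpha a), as a mono-filtration of X.1 *)
Definition slice {R : realType} (X : bifilt R) (b a : R * R) : monofilt R :=
  (X.1, fun s => inf [set alpha : R | bf_mem X (b.1 + alpha * a.1, b.2 + alpha * a.2) s]).

Definition dmatch {R : realType} (F : fieldType) (X Y : bifilt R) : \bar R :=
  ereal_sup [set ((lhat ba.2)%:E * dB F (slice X ba.1 ba.2) (slice Y ba.1 ba.2))%E
            | ba in [set ba : (R * R) * (R * R) | is_line ba.1 ba.2]].

Definition lebR4 {R : realType} := ((@lebR2 R) \x (@lebR2 R))%E.

Definition Delta2 {R : realType} : set ((R * R) * (R * R)) := [set z | lt2 z.1 z.2].

Definition rect {R : realType} (w h : R) : set (R * R) :=
  [set p | 0 <= p.1 <= w /\ 0 <= p.2 <= h].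

(* for p < q: unit direction a of the line through p, q; its base point  *)
(* b on x = -y; and parameters lambda_p < lambda_q with p = b + lambda_p a *)
Definition pq_dir {R : realType} (p q : R * R) : R * R :=
  let d := Num.sqrt ((q.1 - p.1) ^+ 2 + (q.2 - p.2) ^+ 2) in
  ((q.1 - p.1) / d, (q.2 - p.2) / d).
Definition pq_lam {R : realType} (p q : R * R) : R :=
  let a := pq_dir p q in (p.1 + p.2) / (a.1 + a.2).
Definition pq_base {R : realType} (p q : R * R) : R * R :=
  let a := pq_dir p q in let l := pq_lam p q in (p.1 - l * a.1, p.2 - l * a.2).
Definition pq_lamq {R : realType} (p q : R * R) : R :=
  pq_lam p q + Num.sqrt ((q.1 - p.1) ^+ 2 + (q.2 - p.2) ^+ 2).

Definition Phi {R : realType} (phi : featmap R) (w h : R) (X : bifilt R)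
  (z : (R * R) * (R * R)) : R :=
  let p := z.1 in let q := z.2 in
  (\1_(rect w h) p) * (\1_(rect w h) q) * lhat (pq_dir p q) *
  phi (slice X (pq_base p q) (pq_dir p q)) (pq_lam p q, pq_lamq p q).

Definition L2dist_Delta2 {R : realType} (f g : (R * R) * (R * R) -> R) : \bar R :=
  ((\int[lebR4]_(z in Delta2) ((f z - g z) ^+ 2)%:E) `^ (2^-1))%E.

(* Main.v *)
Require Import Defs.
From HB Require Import structures.
From mathcomp Require Import all_boot all_order all_algebra finmap.
From mathcomp Require Import all_classical all_reals all_analysis.
From mathcomp Require Import measurable_realfun ring lra.
Import Order.TTheory GRing.Theory Num.Theory.
Local Open Scope ring_scope.
Local Open Scope classical_set_scope.

Lemma lebR2_sigma (R : realType) : sigma_finite setT (@lebR2 R).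
Proof.
rewrite /lebR2.
have /sigma_finiteP[F [TF ndF Foo]] := sigma_finiteT (@lebesgue_measure R).
exists (fun n => F n `*` F n).
  rewrite -setXTT TF predeqE => -[x y]; split.
    move=> [/= [n _ Fnx] [k _ Gky]]; exists (maxn n k) => //; split.
    - by move: x Fnx; exact/subsetPset/ndF/leq_maxl.
    - by move: y Gky; exact/subsetPset/ndF/leq_maxr.
  by move=> [n _ []/= ? ?]; split; exists n.
move=> k; have [? ?] := Foo k.
split; first exact: measurableX.
by rewrite product_measure1E// lte_mul_pinfty// ge0_fin_numE.
Qed.

HB.instance Definition _ (R : realType) := Measure.on (@lebR2 R).
HB.instance Definition _ (R : realType) := Measure_isSigmaFinite.Build _ _ _ (@lebR2 R) (@lebR2_sigma R).

HB.instance Definition _ (R : realType) := Measure.on (@lebR4 R).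

Lemma rectE (R : realType) (w h : R) : rect w h = `[0, w]%classic `*` `[0, h]%classic.
Proof.
by rewrite /rect; apply/seteqP; split => -[x y] /=; rewrite !in_itv /=.
Qed.

Lemma rect_meas (R : realType) (w h : R) : measurable (rect w h).
Proof.
rewrite rectE; apply: measurableX => //.
Qed.

Lemma leb_rect (R : realType) (w h : R) : 0 <= w -> 0 <= h ->
  lebR2 (rect w h) = (w * h)%:E.
Proof.
move=> w0 h0; rewrite rectE /lebR2 product_measure1E //.
rewrite EFinM; congr (_ * _)%E.
- apply: eq_trans (lebesgue_measure_itv `[0, w]%R) _.
  rewrite /= lte_fin; case: ltrP => [_|]; first by rewrite sube0. move => wle.
  by have -> : w = 0 by apply/eqP; rewrite eq_le wle w0.
- apply: eq_trans (lebesgue_measure_itv `[0, h]%R) _.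
  rewrite /= lte_fin; case: ltrP => [_|]; first by rewrite sube0. move => hle.
  by have -> : h = 0 by apply/eqP; rewrite eq_le hle h0.
Qed.

Lemma int_le_sup d (T : measurableType d) (R : realType) (mu : {measure set T -> \bar R}) (f g : T -> \bar R) :
  (forall z, 0 <= f z)%E -> (forall z, f z <= g z)%E ->
  (\int[mu]_z f z <= \int[mu]_z g z)%E.
Proof.
move=> f0 fg.
have g0 : forall z, (0 <= g z)%E by move=> z; exact: le_trans (f0 z) (fg z).
rewrite !ge0_integralTE //; apply: le_ereal_sup => _ [hh hf <-].
by exists hh => // z; exact: le_trans (hf z) (fg z).
Qed.

Lemma L2_gen d (T : measurableType d) (R : realType) (mu : {measure set T -> \bar R})
  (D A : set T) (F : T -> R) (c k : R) :
  measurable A -> 0 <= c -> 0 <= k -> mu A = (k ^+ 2)%:E ->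
  (forall z, D z -> `|F z| <= c * \1_A z) ->
  (((\int[mu]_(z in D) ((F z) ^+ 2)%:E) `^ 2^-1) <= (c * k)%:E)%E.
Proof.
move=> mA c0 k0 muA H.
have I : (\int[mu]_(z in D) ((F z) ^+ 2)%:E <= ((c * k) ^+ 2)%:E)%E.
  rewrite integral_mkcond.
  apply: (@le_trans _ _ (\int[mu]_z ((c ^+ 2)%:E * (\1_A z)%:E))%E).
    apply: int_le_sup => z.
      by rewrite /patch; case: ifP => //; rewrite lee_fin sqr_ge0.
    rewrite /patch; case: ifP => [/[!inE] Dz|_]; last first.
      by apply: mule_ge0; rewrite lee_fin ?sqr_ge0.
    rewrite -EFinM lee_fin.
    have := H z Dz.
    rewrite !indicE.
    case: (boolP (z \in A)) => zA; rewrite ?mulr1 ?mulr0.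
    + move=> hz; rewrite -real_normK ?num_real // lerXn2r ?nnegrE //.
    + by rewrite normr_le0 => /eqP ->; rewrite expr0n.
  rewrite (@ge0_integralZl _ _ _ mu setT measurableT (fun z => (\1_A z)%:E)); last first.
  - by rewrite lee_fin sqr_ge0.
  - by move=> z _; rewrite lee_fin.
  - by apply/measurable_EFinP; exact: measurable_indic.
  rewrite integral_indic // setIT muA -!EFinM lee_fin.
  by rewrite exprMn.
apply: (@le_trans _ _ (((c * k) ^+ 2)%:E `^ 2^-1)%E).
  apply: gt0_ler_poweR => //.
  - by rewrite in_itv /= leey andbT; apply: integral_ge0 => z _; rewrite lee_fin sqr_ge0.
  - by rewrite in_itv /= leey andbT lee_fin sqr_ge0.
rewrite poweR_EFin -powR_mulrn ?mulr_ge0 // -powRrM mulfV // ?powRr1 ?mulr_ge0 //.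
Qed.

Lemma pm1E d1 d2 (T1 : measurableType d1) (T2 : measurableType d2) (R : realType)
  (m1 : {measure set T1 -> \bar R}) (m2 : {measure set T2 -> \bar R}) (A1 : set T1) (A2 : set T2) :
  measurable A1 -> measurable A2 ->
  (m1 \x m2)%E (A1 `*` A2) = (m1 A1 * m2 A2)%E.
Proof.
move=> mA1 mA2 /=; rewrite /product_measure1 /=.
rewrite (eq_integral (fun x => (\1_A1 x)%:E * m2 A2)%E); last first.
  move=> x _; rewrite indicE; have [xA1|xA1] /= := boolP (x \in A1).
    by rewrite in_xsectionX// mul1e.
  by rewrite mul0e notin_xsectionX// measure0.
rewrite (@ge0_integralZr _ _ _ m1 setT measurableT (fun x => (\1_A1 x)%:E)); last first.
- exact: measure_ge0.
- by move=> x _; rewrite lee_fin.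
- by apply/measurable_EFinP; exact: measurable_indic.
by rewrite integral_indic ?setIT.
Qed.

Lemma lebR4_rect (R : realType) (w h : R) : 0 <= w -> 0 <= h ->
  lebR4 (rect w h `*` rect w h) = ((w * h) ^+ 2)%:E.
Proof.
move=> w0 h0.
rewrite /lebR4 pm1E; try exact: rect_meas.
have E : forall e : \bar R, e = (w * h)%:E -> (e * e)%E = ((w * h) ^+ 2)%:E.
  by move=> e ->; rewrite -EFinM expr2.
by apply: E; exact: leb_rect.
Qed.
Lemma fin_argmin (R : realType) (T : eqType) (s : seq T) (x0 : T) (f : T -> R) :
  x0 \in s -> exists2 x, x \in s & forall y, y \in s -> f x <= f y.
Proof.
elim: s x0 => [//|a s IH] x0 _.
case: s IH => [|b s] IH.
  by exists a; [rewrite inE eqxx| move=> y; rewrite inE => /eqP ->].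
have [x xs xm] := IH b (mem_head b s).
case: (leP (f a) (f x)) => fa.
  exists a; first by rewrite inE eqxx.
  by move=> y; rewrite inE => /orP [/eqP ->|/xm]; [|apply: le_trans].
exists x; first by rewrite inE xs orbT.
by move=> y; rewrite inE => /orP [/eqP ->|/xm] //; rewrite ltW.
Qed.

Lemma fin_lb (R : realType) (T : eqType) (s : seq T) (f : T -> R) :
  exists B, forall x, x \in s -> B <= f x.
Proof.
elim: s => [|a s [B HB]]; first by exists 0.
exists (Num.min (f a) B) => x; rewrite inE => /orP [/eqP ->|/HB].
  by rewrite ge_min lexx.
by move=> h; rewrite ge_min h orbT.
Qed.

Lemma crit_exists (R : realType) (X : bifilt R) (s : simplex) :
  is_bifilt X -> s \in X.1 -> exists2 g, g \in X.2 s & critical X s g.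
Proof.
move=> [_ [Hne _]] sX.
have /fset0Pn [x0 x0s] := Hne s sX.
have [g gs gm] := @fin_argmin R _ (enum_fset (X.2 s)) x0 (fun g => g.1 + g.2) x0s.
exists g => // eps eps0; split; [|split; [|split]].
- move=> [_ [g' g's [/= h1 h2]]]; have := gm g' g's => /=; lra.
- move=> [_ [g' g's [/= h1 h2]]]; have := gm g' g's => /=; lra.
- split => //; exists g => //; split => /=; lra.
- split => //; exists g => //; split => /=; lra.
Qed.

Lemma size_le_bf (R : realType) (X : bifilt R) :
  is_bifilt X -> (#|` X.1| <= bf_size X)%N.
Proof.
move=> HX; rewrite /bf_size -sum1_size big_seq [X in (_ <= X)%N]big_seq.
apply: leq_sum => s sX.
have [g gs gc] := @crit_exists R X s HX sX.
rewrite -has_count; apply/hasP; exists g => //.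
exact/asboolP.
Qed.

Lemma pq_props (R : realType) (p q : R * R) : lt2 p q ->
  is_line (pq_base p q) (pq_dir p q) /\ Delta1 (pq_lam p q, pq_lamq p q) /\
  0 < lhat (pq_dir p q).
Proof.
case: p q => [p1 p2] [q1 q2] [/= h1 h2].
set d := Num.sqrt ((q1 - p1) ^+ 2 + (q2 - p2) ^+ 2).
have s0 : 0 < (q1 - p1) ^+ 2 + (q2 - p2) ^+ 2.
  by apply: ltr_wpDr; [exact: sqr_ge0| apply: exprn_gt0; rewrite subr_gt0].
have d0 : 0 < d by rewrite sqrtr_gt0.
have dd : d ^+ 2 = (q1 - p1) ^+ 2 + (q2 - p2) ^+ 2 by rewrite sqr_sqrtr // ltW.
have a1 : 0 < (q1 - p1) / d by rewrite divr_gt0 // subr_gt0.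
have a2 : 0 < (q2 - p2) / d by rewrite divr_gt0 // subr_gt0.
have dir : pq_dir (p1, p2) (q1, q2) = ((q1 - p1) / d, (q2 - p2) / d) by [].
split; last split.
- rewrite /is_line /pq_base /pq_lam dir /=.
  split; last split => //; last split => //.
  + have sa : (q1 - p1) / d + (q2 - p2) / d != 0 by rewrite gt_eqF // addr_gt0.
    set A1 := (q1 - p1) / d in sa *; set A2 := (q2 - p2) / d in sa *.
    have : (p1 + p2) / (A1 + A2) * (A1 + A2) = p1 + p2 by rewrite divfK.
    set L := (p1 + p2) / (A1 + A2) => HL.
    apply/eqP; rewrite -subr_eq0 opprK; apply/eqP.
    by rewrite addrACA -opprD -mulrDr HL subrr.
  + rewrite !expr_div_n -mulrDl -dd divff //.
    by rewrite expf_neq0 // gt_eqF.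
- rewrite /Delta1 /pq_lamq /=; rewrite -/d.
  by rewrite ltrDl.
- by rewrite /lhat dir /= lt_min a1 a2.
Qed.

Lemma slice_set_props (R : realType) (X : bifilt R) (b a : R * R) (s : simplex) :
  is_bifilt X -> 0 < a.1 -> 0 < a.2 -> s \in X.1 ->
  let S := [set alpha : R | bf_mem X (b.1 + alpha * a.1, b.2 + alpha * a.2) s] in
  S !=set0 /\ has_lbound S.
Proof.
move=> [_ [Hne _]] a1 a2 sX S; split.
- have /fset0Pn [g gs] := Hne s sX.
  set u := `|g.1 - b.1| / a.1; set v := `|g.2 - b.2| / a.2.
  have ua : u * a.1 = `|g.1 - b.1| by rewrite divfK // gt_eqF.
  have va : v * a.2 = `|g.2 - b.2| by rewrite divfK // gt_eqF.
  have u0 : 0 <= u by rewrite divr_ge0 // ltW.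
  have v0 : 0 <= v by rewrite divr_ge0 // ltW.
  have e1 : g.1 - b.1 <= `|g.1 - b.1| by exact: ler_norm.
  have e2 : g.2 - b.2 <= `|g.2 - b.2| by exact: ler_norm.
  have va1 : 0 <= v * a.1 by rewrite mulr_ge0 // ltW.
  have ua2 : 0 <= u * a.2 by rewrite mulr_ge0 // ltW.
  exists (u + v); split => //; exists g => //; split => /=.
  + rewrite mulrDl; lra.
  + rewrite mulrDl; lra.
- have [B HB] := @fin_lb R _ (enum_fset (X.2 s)) (fun g => (g.1 - b.1) / a.1).
  exists B => alpha [_ [g gs [/= h1 _]]].
  apply: le_trans (HB g gs) _ => /=.
  by rewrite ler_pdivrMr //; lra.
Qed.

Lemma slice_monofilt (R : realType) (X : bifilt R) (b a : R * R) :
  is_bifilt X -> 0 < a.1 -> 0 < a.2 -> is_monofilt (slice X b a).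
Proof.
move=> HX a1 a2; split; first by case: HX.
move=> s t sX tX ts /=.
have [Sne _] := @slice_set_props R X b a s HX a1 a2 sX.
have [_ Tlb] := @slice_set_props R X b a t HX a1 a2 tX.
apply: lb_le_inf => // alpha [_ [g gs [h1 h2]]].
apply: ge_inf => //.
case: HX => [_ [_ Hm]].
have [g' g't [l1 l2]] := Hm s t sX tX ts g gs.
split => //; exists g' => //; split; apply: le_trans; eassumption.
Qed.

Lemma dB_ge0 (R : realType) (F : fieldType) (M1 M2 : monofilt R) : (0 <= dB F M1 M2)%E.
Proof.
apply: le_trans (ereal_sup_ubound _); last by exists 0%N.
apply: le_ereal_inf_tmp => _ [e [e0 _] <-].
by rewrite lee_fin.
Qed.

Lemma dmatch_ge0 (R : realType) (F : fieldType) (X Y : bifilt R) : (0 <= dmatch F X Y)%E.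
Proof.
have lt01 : lt2 ((0 : R), (0 : R)) (1, 1) by split => /=; exact: ltr01.
have [Hl [_ hp]] := @pq_props R _ _ lt01.
apply: le_trans (ereal_sup_ubound _); last first.
  by exists (pq_base (0, 0) (1, 1), pq_dir (0, 0) (1, 1)).
by apply: mule_ge0; [rewrite lee_fin ltW | exact: dB_ge0].
Qed.
Lemma Phi_diff (R : realType) (phi : featmap R) (w h : R) (X Y : bifilt R) z :
  Delta2 z -> `|Phi phi w h X z - Phi phi w h Y z| =
  \1_(rect w h `*` rect w h) z *
  (lhat (pq_dir z.1 z.2) *
   `|phi (slice X (pq_base z.1 z.2) (pq_dir z.1 z.2)) (pq_lam z.1 z.2, pq_lamq z.1 z.2) -
     phi (slice Y (pq_base z.1 z.2) (pq_dir z.1 z.2)) (pq_lam z.1 z.2, pq_lamq z.1 z.2)|).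
Proof.
move=> Dz; have [_ [_ hp]] := @pq_props R _ _ Dz.
rewrite /Phi /= !indicE.
case: (boolP (z.1 \in rect w h)) => z1; case: (boolP (z.2 \in rect w h)) => z2.
- have -> : z \in rect w h `*` rect w h by rewrite inE; split; rewrite -inE.
  by rewrite ?mul1r -mulrBr normrM ger0_norm // ltW.
- have -> : (z \in rect w h `*` rect w h) = false.
    by apply/negbTE/negP; rewrite inE => -[_ /mem_set ?]; move/negP: z2; apply.
  by rewrite /= ?mulr0 ?mul0r ?subrr ?normr0.
- have -> : (z \in rect w h `*` rect w h) = false.
    by apply/negbTE/negP; rewrite inE => -[/mem_set ? _]; move/negP: z1; apply.
  by rewrite /= ?mulr0 ?mul0r ?subrr ?normr0.
- have -> : (z \in rect w h `*` rect w h) = false.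
    by apply/negbTE/negP; rewrite inE => -[/mem_set ? _]; move/negP: z1; apply.
  by rewrite /= ?mulr0 ?mul0r ?subrr ?normr0.
Qed.

Theorem theorem2 (R : realType) (F : fieldType) (phi : featmap R) :
  is_feature_map phi -> abs_bounded phi -> int_stable F phi ->
  exists C : R, forall (w h : R) (X Y : bifilt R) (n : nat),
    0 <= w -> 0 <= h ->
    is_bifilt X -> is_bifilt Y -> X.1 = Y.1 ->
    bf_size X = n -> bf_size Y = n ->
    (L2dist_Delta2 (Phi phi w h X) (Phi phi w h Y)
       <= (C * n%:R * (w * h))%:E * dmatch F X Y)%E.
Proof.
move=> _ _ [v3 [v3p Hs]].
exists v3 => w h X Y n w0 h0 HX HY E1 HnX HnY.
set m := #|` X.1|.
have mn : (m <= n)%N by rewrite -HnX; exact: size_le_bf.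
have D0 := @dmatch_ge0 R F X Y.
have key : forall z, Delta2 z ->
  ((lhat (pq_dir z.1 z.2) *
   `|phi (slice X (pq_base z.1 z.2) (pq_dir z.1 z.2)) (pq_lam z.1 z.2, pq_lamq z.1 z.2) -
     phi (slice Y (pq_base z.1 z.2) (pq_dir z.1 z.2)) (pq_lam z.1 z.2, pq_lamq z.1 z.2)|)%:E
   <= (v3 * m%:R)%:E * dmatch F X Y)%E.
  move=> z Dz.
  have [Hl [Hd hp]] := @pq_props R _ _ Dz.
  move: Hl Hd hp.
  set b := pq_base z.1 z.2; set a := pq_dir z.1 z.2.
  move=> Hl Hd hp.
  have [_ [a1 [a2 _]]] := Hl.
  have HmX := @slice_monofilt R X b a HX a1 a2.
  have HmY := @slice_monofilt R Y b a HY a1 a2.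
  have sY : mf_size (slice Y b a) = m by rewrite /mf_size /= -E1.
  have Hst := Hs m _ _ HmX HmY erefl sY _ Hd.
  have Hdm : ((lhat a)%:E * dB F (slice X b a) (slice Y b a) <= dmatch F X Y)%E.
    by apply: ereal_sup_ubound; exists (b, a).
  rewrite EFinM.
  apply: le_trans (lee_wpmul2l _ Hst) _; first by rewrite lee_fin ltW.
  rewrite muleCA; apply: lee_wpmul2l => //.
  by rewrite lee_fin mulr_ge0 // ltW.
have mA : measurable (rect w h `*` rect w h) by apply: measurableX; exact: rect_meas.
rewrite /L2dist_Delta2.
case ED : (dmatch F X Y) => [r| |]; last by rewrite ED in D0.
- have r0 : 0 <= r by rewrite ED lee_fin in D0.
  rewrite -EFinM.
  have -> : v3 * n%:R * (w * h) * r = (v3 * n%:R * r) * (w * h) by ring.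
  have HH := (@L2_gen _ _ _ lebR4 Delta2 (rect w h `*` rect w h)
     (fun z => Phi phi w h X z - Phi phi w h Y z) (v3 * n%:R * r) (w * h)).
  apply: HH => //.
  + by rewrite !mulr_ge0 // ?ltW.
  + by rewrite mulr_ge0.
  + exact: lebR4_rect.
  + move=> z Dz; rewrite Phi_diff //.
    have := key z Dz; rewrite ED -EFinM lee_fin => kz.
    rewrite mulrC; apply: ler_wpM2r; first by rewrite indicE.
    apply: le_trans kz _.
    apply: ler_wpM2r => //; apply: ler_wpM2l; first exact: ltW.
    by rewrite ler_nat.
- case: (ltrP 0 (v3 * n%:R * (w * h))) => [pos|npos].
    by rewrite gt0_muley ?lte_fin // leey.
  have zero : v3 * n%:R * (w * h) = 0.
    by apply/eqP; rewrite eq_le npos !mulr_ge0 // ltW.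
  rewrite zero mul0e.
  apply: (@le_trans _ _ ((0 * (w * h))%:E)); last by rewrite mul0r.
  have HH := (@L2_gen _ _ _ lebR4 Delta2 (rect w h `*` rect w h)
     (fun z => Phi phi w h X z - Phi phi w h Y z) 0 (w * h)).
  apply: HH => //.
  + by rewrite mulr_ge0.
  + exact: lebR4_rect.
  + move=> z Dz; rewrite Phi_diff // mul0r indicE.
    case: (boolP (z \in rect w h `*` rect w h)) => zA; last by rewrite mul0r.
    rewrite mul1r.
    have [z1 z2] : rect w h z.1 /\ rect w h z.2 by move: zA; rewrite inE.
    have [l1 l2] := Dz.
    have wp : 0 < w by move: z1 z2 => [/andP [? ?] _] [/andP [? ?] _]; lra.
    have hp : 0 < h by move: z1 z2 => [_ /andP [? ?]] [_ /andP [? ?]]; lra.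
    have n0 : n = 0%N.
      apply/eqP; rewrite -(eqr_nat R); apply/eqP.
      move/eqP: zero; rewrite !mulf_eq0 (gt_eqF v3p) (gt_eqF wp) (gt_eqF hp) /=.
      by rewrite orbF => /eqP.
    have m0 : m = 0%N by apply/eqP; rewrite -leqn0 -n0.
    have := key z Dz; rewrite ED m0 mulr0 mul0e lee_fin => kz.
    by [].
Qed.
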